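(* Let $R$ be an incline with $|R|\geq 2$. Then $R$ is $k$-simple if and only if $R$ is isomorphic to $R_0$ or to $R_1$, where $R_0$ and $R_1$ are the semirings on $\{0,1\}$ with addition $0+0=0$, $0+1=1+0=1+1=1$, and multiplication: in $R_0$, $xy=0$ for all $x,y$; in $R_1$, $1\cdot 1=1$ and $xy=0$ otherwise.
   Context: A semiring $(R,+,\cdot)$ is a set with two binary operations such that $(R,+)$ is a commutative semigroup, $(R,\cdot)$ is a semigroup, and multiplication distributes over addition from both sides; no zero or identity is assumed. An incline is a semiring with $r+r=r$ for all $r$ and $x+xy=x=x+yx$ for all $x,y\in R$. A zero of $R$ is an element $0$ with $0+r=r$ and $0r=r0=0$ for all $r\in R$. An ideal of $R$ is a nonempty subset $A\subseteq R$ with $a+b\in A$ and $ra,ar\in A$ for all $a,b\in A$, $r\in R$; the trivial ideals are $R$ and, if $R$ has a zero $0$, $\{0\}$. For an ideal $A$, its $k$-closure is $\overline{A}=\{x\in R\mid x+a=b \text{ for some } a,b\in A\}$, and $A$ is a $k$-ideal if $A=\overline{A}$. $R$ is $k$-simple if it has no $k$-ideals other than the trivial ideals. *)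

(* Defs.v *)
Record Semiring : Type := {
  carrier :> Type;
  sadd : carrier -> carrier -> carrier;
  smul : carrier -> carrier -> carrier;
  sadd_comm : forall x y, sadd x y = sadd y x;
  sadd_assoc : forall x y z, sadd x (sadd y z) = sadd (sadd x y) z;
  smul_assoc : forall x y z, smul x (smul y z) = smul (smul x y) z;
  smul_distr_l : forall x y z, smul x (sadd y z) = sadd (smul x y) (smul x z);
  smul_distr_r : forall x y z, smul (sadd x y) z = sadd (smul x z) (smul y z)
}.

Arguments sadd {s} _ _.
Arguments smul {s} _ _.

Definition is_incline (R : Semiring) : Prop :=
  (forall r : R, sadd r r = r) /\
  (forall x y : R, sadd x (smul x y) = x /\ sadd x (smul y x) = x).

Definition is_zero (R : Semiring) (z : R) : Prop :=
  forall r : R, sadd z r = r /\ smul z r = z /\ smul r z = z.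

Definition is_ideal (R : Semiring) (A : R -> Prop) : Prop :=
  (exists a, A a) /\
  (forall a b, A a -> A b -> A (sadd a b)) /\
  (forall r a, A a -> A (smul r a) /\ A (smul a r)).

Definition kclosure (R : Semiring) (A : R -> Prop) : R -> Prop :=
  fun x => exists a b, A a /\ A b /\ sadd x a = b.

Definition is_kideal (R : Semiring) (A : R -> Prop) : Prop :=
  is_ideal R A /\ (forall x, A x <-> kclosure R A x).

Definition is_trivial_ideal (R : Semiring) (A : R -> Prop) : Prop :=
  (forall x, A x) \/ (exists z, is_zero R z /\ forall x, A x <-> x = z).

Definition k_simple (R : Semiring) : Prop :=
  forall A : R -> Prop, is_kideal R A -> is_trivial_ideal R A.

Definition semiring_iso (R S : Semiring) (f : R -> S) : Prop :=
  (forall x y, f (sadd x y) = sadd (f x) (f y)) /\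
  (forall x y, f (smul x y) = smul (f x) (f y)) /\
  (forall x y, f x = f y -> x = y) /\
  (forall s, exists x, f x = s).

Definition isomorphic (R S : Semiring) : Prop := exists f : R -> S, semiring_iso R S f.

(* The two-element semirings on {0,1} (false = 0, true = 1): addition is "or". *)
Definition R0 : Semiring.
Proof.
  refine {| carrier := bool; sadd := orb; smul := fun _ _ => false |};
    intros; repeat match goal with b : bool |- _ => destruct b end; reflexivity.
Defined.

Definition R1 : Semiring.
Proof.
  refine {| carrier := bool; sadd := orb; smul := andb |};
    intros; repeat match goal with b : bool |- _ => destruct b end; reflexivity.
Defined.

(* Main.v *)
Require Import Defs.
From Stdlib Require Import Classical ClassicalEpsilon.

Section S.
Variable R : Semiring.

Definition fb (t : R) (x : R) : bool :=
  if excluded_middle_informative (x = t) then true else false.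

Lemma fb_t t : fb t t = true.
Proof. unfold fb; destruct excluded_middle_informative; congruence. Qed.
Lemma fb_z t z : z <> t -> fb t z = false.
Proof. intro; unfold fb; destruct excluded_middle_informative; congruence. Qed.

Lemma two_iso (z t : R) (Hi : forall r : R, sadd r r = r)
  (Hz : is_zero R z) (Hzt : z <> t) (Hall : forall x, x = z \/ x = t) :
  (smul t t = z -> isomorphic R R0) /\ (smul t t = t -> isomorphic R R1).
Proof.
  assert (A1: sadd z t = t) by apply Hz.
  assert (A2: sadd t z = t) by (rewrite sadd_comm; apply Hz).
  assert (A3: sadd z z = z) by apply Hz.
  assert (A4: sadd t t = t) by apply Hi.
  assert (M1: smul z t = z) by apply Hz.
  assert (M2: smul t z = z) by apply Hz.
  assert (M3: smul z z = z) by apply Hz.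
  pose proof (fb_t t) as Ft. pose proof (fb_z t z Hzt) as Fz.
  split; intro Htt; exists (fb t); repeat split.
  all: try (intros x y; destruct (Hall x), (Hall y); subst x y;
    repeat first [rewrite A1 | rewrite A2 | rewrite A3 | rewrite A4 | rewrite M1
                  | rewrite M2 | rewrite M3 | rewrite Htt];
    rewrite ?Ft, ?Fz; (reflexivity || (intro; congruence))).
  all: intros [|]; [exists t; exact Ft | exists z; exact Fz].
Qed.
End S.

Theorem theorem5p4 (R : Semiring) :
  is_incline R ->
  (exists x y : R, x <> y) ->
  (k_simple R <-> (isomorphic R R0 \/ isomorphic R R1)).
Proof.
  intros [Hi Hab] [u [v Huv]]. split.
  - intro Hk.
    assert (Key : forall x : R, (forall y, sadd y x = x) \/ is_zero R x).
    { intro x.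
      destruct (Hk (fun y => sadd y x = x)) as [H|[z [Hz H]]].
      + split; [split|].
        * exists x; apply Hi.
        * split.
          -- intros a b Ha Hb. rewrite <- sadd_assoc, Hb; exact Ha.
          -- intros r a Ha. split.
             ++ rewrite <- Ha at 1. rewrite sadd_assoc.
                rewrite (sadd_comm _ (smul r a) a), (proj2 (Hab a r)). exact Ha.
             ++ rewrite <- Ha at 1. rewrite sadd_assoc.
                rewrite (sadd_comm _ (smul a r) a), (proj1 (Hab a r)). exact Ha.
        * intro y; split.
          -- intro Hy. exists x, x. repeat split; auto.
          -- intros [a [b [Ha [Hb E]]]]. rewrite <- Ha at 1. rewrite sadd_assoc, E. exact Hb.
      + left; exact H.
      + right. assert (x = z) by (apply H; apply Hi). subst; exact Hz. }
    assert (Ztop : forall z t, is_zero R z -> (forall y : R, sadd y t = t) ->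
               (forall x, x = z \/ x = t) /\ z <> t).
    { intros z t Hz Ht. split.
      - intro x. destruct (Key x) as [Hx|Hx].
        + right. transitivity (sadd t x); [symmetry; apply Hx|].
          rewrite sadd_comm; apply Ht.
        + left. transitivity (sadd z x); [symmetry; apply Hz|].
          rewrite sadd_comm; apply Hx.
      - intro E; subst t. apply Huv.
        transitivity z; [|symmetry].
        * transitivity (sadd z u); [symmetry; apply Hz|].
          rewrite sadd_comm; apply Ht.
        * transitivity (sadd z v); [symmetry; apply Hz|].
          rewrite sadd_comm; apply Ht. }
    assert (Hfin : forall z t, is_zero R z -> (forall y : R, sadd y t = t) ->
               isomorphic R R0 \/ isomorphic R R1).
    { intros z t Hz Ht. destruct (Ztop z t Hz Ht) as [Hall Hzt].
      destruct (two_iso R z t Hi Hz Hzt Hall) as [I0 I1].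
      destruct (Hall (smul t t)) as [E|E]; [left; auto | right; auto]. }
    destruct (Key u) as [Hu|Hu], (Key v) as [Hv|Hv].
    + exfalso; apply Huv. transitivity (sadd v u); [symmetry; apply Hu|].
      rewrite sadd_comm; apply Hv.
    + exact (Hfin v u Hv Hu).
    + exact (Hfin u v Hu Hv).
    + exfalso; apply Huv. transitivity (sadd v u); [symmetry; apply Hv|].
      rewrite sadd_comm; apply Hu.
  - intros HI A [[[a Ha] [Hadd Hmul]] HA].
    assert (G : exists f : R -> bool, (forall x y, f (sadd x y) = orb (f x) (f y)) /\
              (forall x y, f x = false -> f (smul x y) = false /\ f (smul y x) = false) /\
              (forall x y, f x = f y -> x = y) /\ (forall s, exists x, f x = s)).
    { destruct HI as [[f [H1 [H2 [H3 H4]]]]|[f [H1 [H2 [H3 H4]]]]]; exists f;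
        (split; [exact H1|]); (split; [|split; [exact H3|exact H4]]);
        intros x y Hx; rewrite !H2; simpl; rewrite ?Hx;
        split; try reflexivity; destruct (f y); reflexivity. }
    destruct G as [f [H1 [H2 [H3 H4]]]].
    destruct (H4 false) as [z Fz], (H4 true) as [t Ft].
    assert (Hall : forall x, x = z \/ x = t).
    { intro x. destruct (f x) eqn:E; [right|left]; apply H3; congruence. }
    assert (Hz : is_zero R z).
    { intro r. repeat split; apply H3.
      - rewrite H1, Fz; reflexivity.
      - rewrite Fz; apply (H2 z r Fz).
      - rewrite Fz; apply (H2 z r Fz). }
    destruct (classic (A t)) as [At|nAt].
    + left. intro x. destruct (Hall x); subst x; auto.
      apply HA. exists t, t. repeat split; auto. apply H3. rewrite H1, Fz; reflexivity.
    + right. exists z. split; auto. intro x. split.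
      * intro Ax. destruct (Hall x); subst; tauto.
      * intro; subst x. destruct (Hall a); subst; tauto.
Qed.
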